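(* Let $W_1,W_2,W_3$ be generalized modules for a Möbius vertex algebra $V$ and let $\mathcal Y$ be a logarithmic intertwining operator of type $\binom{W_3}{W_1W_2}$. For $\mu\in\mathbb C/\mathbb Z$ and $t\in\mathbb N$ define $\mathcal X^\mu_t:W_1\otimes W_2\to W_3[\log x]\{x\}$ by $$\mathcal X^\mu_t(w_{(1)},x)w_{(2)}=\sum_{k\in\mathbb N}\binom{k+t}{t}\sum_{n\in\mathbb C,\ \bar n=\mu}w_{(1)}{}^{\mathcal Y}_{n;k+t}w_{(2)}x^{-n-1}(\log x)^k,$$ where $\bar n$ is the class of $n$ in $\mathbb C/\mathbb Z$, and $\mathcal X_t$ by the same formula with the sum over all $n\in\mathbb C$. Then each $\mathcal X^\mu_t$ and each $\mathcal X_t$ is a logarithmic intertwining operator of type $\binom{W_3}{W_1W_2}$. If $V,W_1,W_2,W_3$ are strongly graded and $\mathcal Y$ is grading-compatible, then so are $\mathcal X^\mu_t$ and $\mathcal X_t$.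
   Context: Formal calculus: $x,x_0,x_1,x_2$ and $\log x$ are commuting independent formal variables; $\delta(x)=\sum_{n\in\mathbb Z}x^n$; binomial expressions are expanded in nonnegative integral powers of the second summand. A Möbius vertex algebra is a $\mathbb Z$-graded $V=\coprod V_{(n)}$ with $Y(u,x)=\sum_nu_nx^{-n-1}$, vacuum $\mathbf 1$, and an $\mathfrak{sl}(2)$-action $L(-1),L(0),L(1)$ satisfying: lower truncation, vacuum and creation properties, the Jacobi identity, $[L(j),Y(v,x)]=\sum_{k=0}^{j+1}\binom{j+1}kx^kY(L(j-k)v,x)$ for $j=0,\pm1$, the $L(-1)$-derivative property, and $L(0)=n$ on $V_{(n)}$. A generalized $V$-module is $W=\coprod_{n\in\mathbb C}W_{[n]}$ with $Y_W$ and an $\mathfrak{sl}(2)$-action satisfying the analogous axioms, $W_{[n]}$ being the generalized $L(0)$-eigenspace for eigenvalue $n$. A logarithmic intertwining operator of type $\binom{W_3}{W_1W_2}$ is a linear map $w_{(1)}\otimes w_{(2)}\mapsto\mathcal Y(w_{(1)},x)w_{(2)}=\sum_{n\in\mathbb C}\sum_{k\in\mathbb N}w_{(1)}{}^{\mathcal Y}_{n;k}w_{(2)}x^{-n-1}(\log x)^k\in W_3[\log x]\{x\}$ (each coefficient of a power of $x$ a polynomial in $\log x$) such that: $w_{(1)}{}^{\mathcal Y}_{n+m;k}w_{(2)}=0$ for $m\in\mathbb N$ sufficiently large independently of $k$; the Jacobi identity $x_0^{-1}\delta(\frac{x_1-x_2}{x_0})Y_3(v,x_1)\mathcal Y(w_{(1)},x_2)w_{(2)}-x_0^{-1}\delta(\frac{x_2-x_1}{-x_0})\mathcal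 Y(w_{(1)},x_2)Y_2(v,x_1)w_{(2)}=x_2^{-1}\delta(\frac{x_1-x_0}{x_2})\mathcal Y(Y_1(v,x_0)w_{(1)},x_2)w_{(2)}$; $\mathcal Y(L(-1)w_{(1)},x)=\frac d{dx}\mathcal Y(w_{(1)},x)$ with $\frac d{dx}(x^n(\log x)^k)=nx^{n-1}(\log x)^k+kx^{n-1}(\log x)^{k-1}$; $[L(j),\mathcal Y(w_{(1)},x)]=\sum_{i=0}^{j+1}\binom{j+1}ix^i\mathcal Y(L(j-i)w_{(1)},x)$ for $j=0,\pm1$. Strong gradedness: $V=\coprod_{\alpha\in A}V^{(\alpha)}$ and $W_i=\coprod_{\beta\in\tilde A}W_i^{(\beta)}$ ($A\subset\tilde A$ abelian groups) compatible with the weight gradings, with finiteness conditions ($V^{(\alpha)}_{(n)}$, $W^{(\beta)}_{[n]}$ finite-dimensional; $V^{(\alpha)}_{(n)}=0$ for $n$ sufficiently negative; $W^{(\beta)}_{[n+k]}=0$ for $k\in\mathbb Z$ sufficiently negative), $\mathbf 1\in V^{(0)}$, $v_lW^{(\beta)}\subset W^{(\alpha+\beta)}$ for $v\in V^{(\alpha)}$, and $L(j)$ preserving the $A$- and $\tilde A$-gradings. $\mathcal Y$ is grading-compatible if $w_{(1)}{}^{\mathcal Y}_{n;k}w_{(2)}\in W_3^{(\beta+\gamma)}$ for $w_{(1)}\in W_1^{(\beta)}$, $w_{(2)}\in W_2^{(\gamma)}$. *)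

(* Defs.v *)
From HB Require Import structures.
From Stdlib Require Import ClassicalEpsilon.
From mathcomp Require Import all_boot all_order all_algebra.
From mathcomp Require Import complex.
From mathcomp Require Import Rstruct.

Set Implicit Arguments.
Unset Strict Implicit.
Unset Printing Implicit Defensive.

Import Order.TTheory GRing.Theory Num.Theory.
Local Open Scope ring_scope.

Notation C := (complex Rdefinitions.R).

Definition is_lin {U W : lmodType C} (f : U -> W) : Prop :=
  forall (a : C) (u v : U), f (a *: u + v) = a *: f u + f v.

Definition binomz (l : int) (i : nat) : C :=
  (\prod_(j < i) (l%:~R - (j : nat)%:R)) / (i`!)%:R.

Definition fin_sum_eq {W : zmodType} (f g : nat -> W) : Prop :=
  exists N : nat, (forall i, (N <= i)%N -> f i = 0 /\ g i = 0) /\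
    \sum_(i < N) f i = \sum_(i < N) g i.

Definition gen_eig {W : lmodType C} (L0 : W -> W) (n : C) (w : W) : Prop :=
  exists N : nat, iter N (fun u => L0 u - n *: u) w = 0.

Definition fin_dim {W : lmodType C} (P : W -> Prop) : Prop :=
  exists s : seq W, forall w, P w ->
    exists c : nat -> C, w = \sum_(i < size s) c i *: s`_i.

Definition subspace {W : lmodType C} (P : W -> Prop) : Prop :=
  P 0 /\ forall (a : C) u v, P u -> P v -> P (a *: u + v).

Definition direct_sum {I : eqType} {W : lmodType C}
  (D : I -> W -> Prop) (idx : I -> Prop) : Prop :=
  [/\ forall i, subspace (D i),
      forall i, ~ idx i -> forall w, D i w -> w = 0,
      forall w, exists s : seq (I * W),
        w = \sum_(x <- s) x.2 /\ forall x, x \in s -> idx x.1 /\ D x.1 x.2 &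
      forall s : seq (I * W), uniq (map fst s) ->
        (forall x, x \in s -> D x.1 x.2) -> \sum_(x <- s) x.2 = 0 ->
        forall x, x \in s -> x.2 = 0].

Record sl2 (W : lmodType C) := SL2 { Lm1 : W -> W; L0 : W -> W; L1 : W -> W }.

(* L(j) for j = -1, 0, 1 (junk value 0 otherwise; never used) *)
Definition Lj {W : lmodType C} (s : sl2 W) (j : int) : W -> W :=
  if j == -1 then Lm1 s else if j == 0 then L0 s else if j == 1 then L1 s
  else (fun _ => 0).

(* [L(m), L(n)] = (m - n) L(m + n) *)
Definition sl2_rep {W : lmodType C} (s : sl2 W) : Prop :=
  [/\ is_lin (Lm1 s) /\ is_lin (L0 s) /\ is_lin (L1 s),
      forall w, L0 s (Lm1 s w) - Lm1 s (L0 s w) = Lm1 s w,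
      forall w, L0 s (L1 s w) - L1 s (L0 s w) = - L1 s w &
      forall w, L1 s (Lm1 s w) - Lm1 s (L1 s w) = 2%:R *: L0 s w].

(* Vertex operators  Y(v,x) = sum_m v_m x^{-m-1}:  Y v m = v_m          *)
(* All formal-calculus axioms are stated in component form, i.e. as the *)
(* identities between coefficients of the monomials that the formal     *)
(* series identities literally amount to.                               *)

Section VertexOps.
Variables (V W : lmodType C).
Implicit Types (YV : V -> int -> V -> V) (YW : V -> int -> W -> W).

Definition vo_bilinear YW : Prop :=
  (forall m w, is_lin (fun v => YW v m w)) /\ (forall v m, is_lin (YW v m)).

Definition vo_truncation YW : Prop :=
  forall v w, exists M : int, forall m : int, M <= m -> YW v m w = 0.

Definition vo_vacuum (one : V) YW : Prop :=
  forall (m : int) w, YW one m w = if m == -1 then w else 0.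

(* Jacobi identity: coefficient of x0^{-l-1} x1^{-p-1} x2^{-q-1} *)
Definition vo_jacobi YV YW : Prop :=
  forall (v u : V) (w : W) (l p q : int),
    fin_sum_eq
      (fun i => ((-1) ^+ i * binomz l i) *:
         (YW v (l + p - i%:Z) (YW u (q + i%:Z) w)
          - (-1) ^ l *: YW u (l + q - i%:Z) (YW v (p + i%:Z) w)))
      (fun i => binomz p i *: YW (YV v (l + i%:Z) u) (p + q - i%:Z) w).

(* [L(j), Y(v,x)] = sum_{k=0}^{j+1} binom(j+1,k) x^k Y(L(j-k)v, x) *)
Definition vo_Lbracket (sV : sl2 V) (sW : sl2 W) YW : Prop :=
  forall j : int, -1 <= j <= 1 -> forall v (m : int) w,
    Lj sW j (YW v m w) - YW v m (Lj sW j w)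
    = \sum_(k < (absz (j + 1)).+1)
        ('C(absz (j + 1), k))%:R *: YW (Lj sV (j - k%:Z) v) (m + k%:Z) w.

(* Y(L(-1)v, x) = d/dx Y(v, x) *)
Definition vo_Lderiv (sV : sl2 V) YW : Prop :=
  forall v (m : int) w, YW (Lm1 sV v) m w = - (m%:~R) *: YW v (m - 1) w.

End VertexOps.

(* V = coprod_{n in Z} V_(n) with L(0) = n on V_(n) *)
Definition Z_graded_by {V : lmodType C} (L0V : V -> V) : Prop :=
  forall v, exists s : seq (int * V), v = \sum_(x <- s) x.2 /\
    forall x, x \in s -> L0V x.2 = x.1%:~R *: x.2.

(* W = coprod_{n in C} W_[n], W_[n] the generalized L(0)-eigenspace *)
Definition C_graded_by {W : lmodType C} (L0W : W -> W) : Prop :=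
  forall w, exists s : seq (C * W), w = \sum_(x <- s) x.2 /\
    forall x, x \in s -> gen_eig L0W x.1 x.2.

Definition mobius_VA {V : lmodType C} (YV : V -> int -> V -> V) (one : V)
  (sV : sl2 V) : Prop :=
  [/\ Z_graded_by (L0 sV) /\ sl2_rep sV, vo_bilinear YV /\ vo_truncation YV,
      vo_vacuum one YV /\
      ((forall v (m : int), 0 <= m -> YV v m one = 0) /\
        (forall v, YV v (-1) one = v)),
      vo_jacobi YV YV &
      vo_Lbracket sV sV YV /\ vo_Lderiv sV YV].

Definition gen_module {V W : lmodType C} (YV : V -> int -> V -> V) (one : V)
  (sV : sl2 V) (YW : V -> int -> W -> W) (sW : sl2 W) : Prop :=
  [/\ C_graded_by (L0 sW) /\ sl2_rep sW, vo_bilinear YW /\ vo_truncation YW,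
      vo_vacuum one YW, vo_jacobi YV YW &
      vo_Lbracket sV sW YW /\ vo_Lderiv sV YW].

(* Yc w1 n k w2 = w1^Y_{n;k} w2, the coefficient of x^{-n-1}(log x)^k.   *)

Definition log_intw {V W1 W2 W3 : lmodType C} (sV : sl2 V)
  (Y1 : V -> int -> W1 -> W1) (s1 : sl2 W1)
  (Y2 : V -> int -> W2 -> W2) (s2 : sl2 W2)
  (Y3 : V -> int -> W3 -> W3) (s3 : sl2 W3)
  (Yc : W1 -> C -> nat -> W2 -> W3) : Prop :=
  [/\ (* linear map W1 (x) W2 -> W3[log x]{x} *)
      ((forall n k w2, is_lin (fun w1 => Yc w1 n k w2)) /\
        (forall w1 n k, is_lin (Yc w1 n k))) /\
      (* each coefficient of a power of x is a polynomial in log x *)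
      (forall w1 w2 n, exists K : nat, forall k, (K <= k)%N -> Yc w1 n k w2 = 0),
      (forall w1 w2 n, exists M : nat, forall m k, (M <= m)%N ->
          Yc w1 (n + m%:R) k w2 = 0),
      (* Jacobi identity: coefficient of
         x0^{-l-1} x1^{-p-1} x2^{-q-1} (log x2)^k *)
      (forall (v : V) w1 w2 (l p : int) (q : C) (k : nat),
        fin_sum_eq
          (fun i => ((-1) ^+ i * binomz l i) *:
             (Y3 v (l + p - i%:Z) (Yc w1 (q + i%:R) k w2)
              - (-1) ^ l *: Yc w1 (l%:~R + q - i%:R) k (Y2 v (p + i%:Z) w2)))
          (fun i => binomz p i *: Yc (Y1 v (l + i%:Z) w1) (p%:~R + q - i%:R) k w2)),
      (* L(-1)-derivative property: coefficient of x^{-m-1}(log x)^k *)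
      (forall w1 w2 (m : C) (k : nat),
        Yc (Lm1 s1 w1) m k w2
        = - m *: Yc w1 (m - 1) k w2 + (k.+1)%:R *: Yc w1 (m - 1) k.+1 w2) &
      (* [L(j), Y(w1,x)] = sum_i binom(j+1,i) x^i Y(L(j-i)w1, x) *)
      (forall j : int, -1 <= j <= 1 -> forall w1 w2 (m : C) (k : nat),
        Lj s3 j (Yc w1 m k w2) - Yc w1 m k (Lj s2 j w2)
        = \sum_(i < (absz (j + 1)).+1)
            ('C(absz (j + 1), i))%:R *: Yc (Lj s1 (j - i%:Z) w1) (m + i%:R) k w2)].

(* n lies in the class mu = c + Z of C/Z *)
Definition in_class (c n : C) : Prop := exists z : int, n = c + z%:~R.

Definition Xmu {W1 W2 W3 : lmodType C} (c : C) (t : nat)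
  (Yc : W1 -> C -> nat -> W2 -> W3) : W1 -> C -> nat -> W2 -> W3 :=
  fun w1 n k w2 =>
    if excluded_middle_informative (in_class c n)
    then ('C(k + t, t))%:R *: Yc w1 n (k + t)%N w2 else 0.

Definition Xall {W1 W2 W3 : lmodType C} (t : nat)
  (Yc : W1 -> C -> nat -> W2 -> W3) : W1 -> C -> nat -> W2 -> W3 :=
  fun w1 n k w2 => ('C(k + t, t))%:R *: Yc w1 n (k + t)%N w2.

Definition subgroup {At : zmodType} (A : At -> Prop) : Prop :=
  A 0 /\ forall a b, A a -> A b -> A (a - b).

(* V strongly graded w.r.t. the subgroup A of At; gV a = V^(a) *)
Definition strongly_graded_VA {V : lmodType C} {At : zmodType}
  (YV : V -> int -> V -> V) (one : V) (sV : sl2 V)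
  (A : At -> Prop) (gV : At -> V -> Prop) : Prop :=
  [/\ subgroup A /\ direct_sum gV A,
      (forall v, exists s : seq ((At * int) * V), v = \sum_(x <- s) x.2 /\
         forall x, x \in s -> gV x.1.1 x.2 /\ L0 sV x.2 = x.1.2%:~R *: x.2),
      (forall a (n : int), fin_dim (fun v => gV a v /\ L0 sV v = n%:~R *: v)),
      (forall a, exists N : int, forall n : int, n < N ->
         forall v, gV a v -> L0 sV v = n%:~R *: v -> v = 0) /\
      gV 0 one &
      (forall a b v u (m : int), gV a v -> gV b u -> gV (a + b) (YV v m u)) /\
      (forall a v, gV a v -> [/\ gV a (Lm1 sV v), gV a (L0 sV v) & gV a (L1 sV v)])].

(* W strongly graded w.r.t. At; gW b = W^(b) *)
Definition strongly_graded_mod {V W : lmodType C} {At : zmodType}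
  (gV : At -> V -> Prop) (YW : V -> int -> W -> W) (sW : sl2 W)
  (gW : At -> W -> Prop) : Prop :=
  [/\ direct_sum gW (fun _ => True) /\
      (forall w, exists s : seq ((At * C) * W), w = \sum_(x <- s) x.2 /\
         forall x, x \in s -> gW x.1.1 x.2 /\ gen_eig (L0 sW) x.1.2 x.2),
      (forall b (n : C), fin_dim (fun w => gW b w /\ gen_eig (L0 sW) n w)),
      (forall b (n : C), exists K : int, forall k : int, k < K ->
         forall w, gW b w -> gen_eig (L0 sW) (n + k%:~R) w -> w = 0),
      (forall a b v w (m : int), gV a v -> gW b w -> gW (a + b) (YW v m w)) &
      (forall b w, gW b w -> [/\ gW b (Lm1 sW w), gW b (L0 sW w) & gW b (L1 sW w)])].

Definition grading_compatible {W1 W2 W3 : lmodType C} {At : zmodType}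
  (g1 : At -> W1 -> Prop) (g2 : At -> W2 -> Prop) (g3 : At -> W3 -> Prop)
  (Yc : W1 -> C -> nat -> W2 -> W3) : Prop :=
  forall b c w1 w2 (n : C) (k : nat), g1 b w1 -> g2 c w2 -> g3 (b + c) (Yc w1 n k w2).

(* Main.v *)
Require Import Defs.
From HB Require Import structures.
From mathcomp Require Import all_boot all_order all_algebra.
From mathcomp Require Import complex Rstruct.
From mathcomp Require Import zify ring.
From Stdlib Require Import ClassicalEpsilon.
Import GRing.Theory Num.Theory.
Set Implicit Arguments.
Unset Strict Implicit.
Local Open Scope ring_scope.

Lemma int3 (j : int) : -1 <= j <= 1 -> j = -1 \/ j = 0 \/ j = 1.
Proof. move=> h; lia. Qed.

Lemma lin0 (U W : lmodType C) (f : U -> W) : is_lin f -> f 0 = 0.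
Proof.
move=> h; have := h 1 0 0; rewrite !scale1r addr0 -{1}(addr0 (f 0)).
by move/addrI.
Qed.

Lemma linZ (U W : lmodType C) (f : U -> W) a u : is_lin f -> f (a *: u) = a *: f u.
Proof. by move=> h; have := h a u 0; rewrite !addr0 (lin0 h) addr0. Qed.

Lemma Lj_lin (W : lmodType C) (s : sl2 W) j : sl2_rep s -> -1 <= j <= 1 -> is_lin (Lj s j).
Proof.
case=> [[h1 [h2 h3]] _ _ _] /int3 [->|[->|->]]; by rewrite /Lj.
Qed.

Lemma fse_ext (W : zmodType) (f g f' g' : nat -> W) :
  (forall i, f i = f' i) -> (forall i, g i = g' i) -> fin_sum_eq f g -> fin_sum_eq f' g'.
Proof.
move=> hf hg [N [h1 h2]]; exists N; split.
  by move=> i /h1; rewrite hf hg.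
have e1 : \sum_(i < N) f' i = \sum_(i < N) f i by apply: eq_bigr => i _; rewrite hf.
have e2 : \sum_(i < N) g' i = \sum_(i < N) g i by apply: eq_bigr => i _; rewrite hg.
by rewrite e1 e2.
Qed.

Lemma fse_scale (W : lmodType C) (a : C) (f g : nat -> W) :
  fin_sum_eq f g -> fin_sum_eq (fun i => a *: f i) (fun i => a *: g i).
Proof.
move=> [N [h1 h2]]; exists N; split.
  by move=> i /h1 [-> ->]; rewrite scaler0.
by rewrite -!scaler_sumr h2.
Qed.

Lemma fse_zero (W : zmodType) : fin_sum_eq (fun _ : nat => 0 : W) (fun _ => 0).
Proof. by exists 0%N; split. Qed.

Lemma binid (k t : nat) :
  ('C(k + t, t) * (k + t).+1 = k.+1 * 'C(k.+1 + t, t))%N.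
Proof.
rewrite mulnC addSn.
have := mul_bin_down (k + t).+1 t; rewrite /= => ->.
lia.
Qed.

Lemma XallE (W1 W2 W3 : lmodType C) t (Yc : W1 -> C -> nat -> W2 -> W3) w1 n k w2 :
  Xall t Yc w1 n k w2 = ('C(k + t, t))%:R *: Yc w1 n (k + t)%N w2.
Proof. by []. Qed.

Lemma Xall_intw (V W1 W2 W3 : lmodType C) (sV : sl2 V)
  (Y1 : V -> int -> W1 -> W1) (s1 : sl2 W1)
  (Y2 : V -> int -> W2 -> W2) (s2 : sl2 W2)
  (Y3 : V -> int -> W3 -> W3) (s3 : sl2 W3)
  (Yc : W1 -> C -> nat -> W2 -> W3) t :
  (forall v m, is_lin (Y3 v m)) -> sl2_rep s3 ->
  log_intw sV Y1 s1 Y2 s2 Y3 s3 Yc -> log_intw sV Y1 s1 Y2 s2 Y3 s3 (Xall t Yc).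
Proof.
move=> hY3 hs3 [[[l1 l2] hK] hM hJ hD hL].
constructor.
- split; first split.
  + move=> n k w2 a u v; rewrite /Xall.
    by have /= -> := l1 n (k + t)%N w2 a u v; rewrite scalerDr !scalerA mulrC.
  + move=> w1 n k a u v; rewrite /Xall.
    by rewrite l2 scalerDr !scalerA mulrC.
  move=> w1 w2 n; have [K hK'] := hK w1 w2 n; exists K => k hk.
  by rewrite XallE hK' ?scaler0 // (leq_trans hk) ?leq_addr.
- move=> w1 w2 n; have [M hM'] := hM w1 w2 n; exists M => m k hm.
  by rewrite XallE hM' ?scaler0.
- move=> v w1 w2 l p q k.
  apply: (fse_ext _ _ (fse_scale ('C(k + t, t))%:R (hJ v w1 w2 l p q (k + t)%N))) => i.
    rewrite !XallE (linZ _ _ (hY3 _ _)) !scalerBr !scalerA.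
    by congr (_ *: _ - _ *: _); ring.
  by rewrite XallE !scalerA mulrC.
- move=> w1 w2 m k; rewrite !XallE hD scalerDr !scalerA addSn.
  congr (_ *: _ + _ *: _); first by ring.
  by rewrite -!natrM binid.
- move=> j hj w1 w2 m k; rewrite !XallE (linZ _ _ (Lj_lin hs3 hj)) -scalerBr (hL _ hj).
  rewrite scaler_sumr; apply: eq_bigr => i _.
  by rewrite XallE !scalerA mulrC.
Qed.

Definition mask (W1 W2 W3 : lmodType C) (P : C -> Prop)
  (Y : W1 -> C -> nat -> W2 -> W3) : W1 -> C -> nat -> W2 -> W3 :=
  fun w1 n k w2 => if excluded_middle_informative (P n) then Y w1 n k w2 else 0.

Lemma mask_in (W1 W2 W3 : lmodType C) P (Y : W1 -> C -> nat -> W2 -> W3) w1 n k w2 :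
  P n -> mask P Y w1 n k w2 = Y w1 n k w2.
Proof. by rewrite /mask; case: excluded_middle_informative. Qed.

Lemma mask_out (W1 W2 W3 : lmodType C) P (Y : W1 -> C -> nat -> W2 -> W3) w1 n k w2 :
  ~ P n -> mask P Y w1 n k w2 = 0.
Proof. by rewrite /mask; case: excluded_middle_informative. Qed.

Lemma mask_intw (V W1 W2 W3 : lmodType C) (sV : sl2 V)
  (Y1 : V -> int -> W1 -> W1) (s1 : sl2 W1)
  (Y2 : V -> int -> W2 -> W2) (s2 : sl2 W2)
  (Y3 : V -> int -> W3 -> W3) (s3 : sl2 W3)
  (Yc : W1 -> C -> nat -> W2 -> W3) (P : C -> Prop) :
  (forall n (z : int), P (n + z%:~R) <-> P n) ->
  (forall v m, is_lin (Y3 v m)) -> sl2_rep s3 ->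
  log_intw sV Y1 s1 Y2 s2 Y3 s3 Yc -> log_intw sV Y1 s1 Y2 s2 Y3 s3 (mask P Yc).
Proof.
move=> hP hY3 hs3 [[[l1 l2] hK] hM hJ hD hL].
have eN : forall (q : C) (i : nat), q + i%:R = q + (i%:Z)%:~R by [].
have eL : forall (q : C) (l : int) (i : nat), l%:~R + q - i%:R = q + (l - i%:Z)%:~R.
  by move=> q l i; ring.
have eM : forall m : C, m - 1 = m + (-1 : int)%:~R by move=> m; rewrite /=; ring.
constructor.
- split; first split.
  + move=> n k w2 a u v; rewrite /mask; case: excluded_middle_informative => hh.
      by have /= -> := l1 n k w2 a u v.
    by rewrite scaler0 addr0.
  + move=> w1 n k a u v; rewrite /mask; case: excluded_middle_informative => hh.
      by rewrite l2.
    by rewrite scaler0 addr0.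
  move=> w1 w2 n; have [K hK'] := hK w1 w2 n; exists K => k hk.
  by rewrite /mask; case: excluded_middle_informative => // hh; rewrite hK'.
- move=> w1 w2 n; have [M hM'] := hM w1 w2 n; exists M => m k hm.
  by rewrite /mask; case: excluded_middle_informative => // hh; rewrite hM'.
- move=> v w1 w2 l p q k.
  have [Pq|nPq] := excluded_middle_informative (P q).
    apply: (fse_ext _ _ (hJ v w1 w2 l p q k)) => i.
      by rewrite !mask_in // ?eN ?eL hP.
    by rewrite mask_in // eL hP.
  apply: (fse_ext _ _ (fse_zero W3)) => i.
    rewrite !mask_out ?eN ?eL ?hP // (lin0 (hY3 _ _)).
    by rewrite scaler0 subr0 scaler0.
  by rewrite mask_out ?eL ?hP // scaler0.
- move=> w1 w2 m k.
  have [Pm|nPm] := excluded_middle_informative (P m).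
    by rewrite !mask_in ?eM ?hP.
  by rewrite !mask_out ?eM ?hP // !scaler0 addr0.
- move=> j hj w1 w2 m k.
  have [Pm|nPm] := excluded_middle_informative (P m).
    rewrite !mask_in // hL //; apply: eq_bigr => i _.
    by rewrite mask_in // eN hP.
  rewrite !mask_out // (lin0 (Lj_lin hs3 hj)) subr0 big1 // => i _.
  by rewrite mask_out ?scaler0 // eN hP.
Qed.

Lemma in_class_shift (c n : C) (z : int) : in_class c (n + z%:~R) <-> in_class c n.
Proof.
split=> -[z' e].
  by exists (z' - z); rewrite intrB addrA -e addrK.
by exists (z' + z); rewrite intrD addrA e.
Qed.

Unset Implicit Arguments.

Theorem proposition3p29
  (V W1 W2 W3 : lmodType C)
  (YV : V -> int -> V -> V) (one : V) (sV : sl2 V)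
  (Y1 : V -> int -> W1 -> W1) (s1 : sl2 W1)
  (Y2 : V -> int -> W2 -> W2) (s2 : sl2 W2)
  (Y3 : V -> int -> W3 -> W3) (s3 : sl2 W3)
  (Yc : W1 -> C -> nat -> W2 -> W3) :
  mobius_VA YV one sV ->
  gen_module YV one sV Y1 s1 ->
  gen_module YV one sV Y2 s2 ->
  gen_module YV one sV Y3 s3 ->
  log_intw sV Y1 s1 Y2 s2 Y3 s3 Yc ->
  [/\ (forall (mu : C) (t : nat), log_intw sV Y1 s1 Y2 s2 Y3 s3 (Xmu mu t Yc)),
      (forall t : nat, log_intw sV Y1 s1 Y2 s2 Y3 s3 (Xall t Yc)) &
      (forall (At : zmodType) (A : At -> Prop) (gV : At -> V -> Prop)
              (g1 : At -> W1 -> Prop) (g2 : At -> W2 -> Prop) (g3 : At -> W3 -> Prop),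
         strongly_graded_VA YV one sV A gV ->
         strongly_graded_mod gV Y1 s1 g1 ->
         strongly_graded_mod gV Y2 s2 g2 ->
         strongly_graded_mod gV Y3 s3 g3 ->
         grading_compatible g1 g2 g3 Yc ->
         (forall (mu : C) (t : nat), grading_compatible g1 g2 g3 (Xmu mu t Yc)) /\
         (forall t : nat, grading_compatible g1 g2 g3 (Xall t Yc)))].
Proof.
move=> _ _ _ [[_ hs3] [[_ hY3] _] _ _ _] hY.
have hX : forall t, log_intw sV Y1 s1 Y2 s2 Y3 s3 (Xall t Yc).
  by move=> t; apply: Xall_intw.
split => //.
- move=> mu t; exact: (mask_intw (@in_class_shift mu) hY3 hs3 (hX t)).
move=> At A gV g1 g2 g3 _ _ _ [[[hsub _ _ _] _] _ _ _ _] hg.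
have gX : forall t, grading_compatible g1 g2 g3 (Xall t Yc).
  move=> t b c w1 w2 n k h1 h2; rewrite XallE -[X in g3 _ X]addr0.
  by apply: (hsub _).2; [exact: hg | exact: (hsub _).1].
split=> // mu t b c w1 w2 n k h1 h2; rewrite /Xmu.
case: excluded_middle_informative => hh; first exact: gX.
exact: (hsub _).1.
Qed.
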